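(* Let $\mathcal{X}$ be a finite set, $\pi$ a probability mass function on $\mathcal{X}$ with full support, and $P$ an ergodic $\pi$-reversible transition matrix. Let a group $\mathcal{G}$ act on $\mathcal{X}$ and let $G$ and $M$ be the Gibbs and Metropolis–Hastings orbit kernels for this same action. Let $\theta:=\|M-G\|_{\ell^2_0(\pi)\to\ell^2_0(\pi)}$. Then $0\le\rho(MPM)-\rho(GPG)\le\rho(P)(2\theta+\theta^2)$.
   Context: $\langle f,g\rangle_\pi=\sum_x f(x)g(x)\pi(x)$, $\ell^2_0(\pi)=\{f:\sum_xf(x)\pi(x)=0\}$, with operator norm taken with respect to $\|\cdot\|_\pi$. With $\mathcal{O}(x)$ the orbit of $x$: $G(x,y)=\pi(y)/\pi(\mathcal{O}(x))$ for $y\in\mathcal{O}(x)$, else $0$; $M(x,y)=\frac{1}{|\mathcal{O}(x)|-1}\min\{1,\pi(y)/\pi(x)\}$ for $y\in\mathcal{O}(x)\setminus\{x\}$, $0$ off the orbit, $M(x,x)=1-\sum_{y\ne x}M(x,y)$. For a $\pi$-self-adjoint kernel $K$, $\rho(K)=\sup_{0\ne f\in\ell^2_0(\pi)}|\langle f,Kf\rangle_\pi|/\langle f,f\rangle_\pi$ (the second-largest eigenvalue in modulus). Equivalently, $\theta$ is the largest absolute value of an eigenvalue of $M$ restricted to the orthogonal complement in $\ell^2(\pi)$ of the functions constant on orbits. *)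

(* Defs.v *)
From HB Require Import structures.
From mathcomp Require Import all_boot all_order all_algebra all_fingroup.
From mathcomp Require Import classical_sets reals.
Set Implicit Arguments. Unset Strict Implicit. Unset Printing Implicit Defensive.
Import Order.TTheory GRing.Theory Num.Theory.
Local Open Scope ring_scope.
Local Open Scope classical_set_scope.

Section Defs.
Variables (R : realType) (X : finType).

Definition kmul (K L : X -> X -> R) : X -> X -> R :=
  fun x y => \sum_(z : X) K x z * L z y.

Definition kid : X -> X -> R := fun x y => if x == y then 1 else 0.

Fixpoint kpow (K : X -> X -> R) (n : nat) : X -> X -> R :=
  match n with O => kid | S m => kmul (kpow K m) K end.

Definition kapp (K : X -> X -> R) (f : X -> R) : X -> R :=
  fun x => \sum_(y : X) K x y * f y.

Definition ksub (K L : X -> X -> R) : X -> X -> R := fun x y => K x y - L x y.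

Variable pi : X -> R.

Definition is_pmf : Prop := (forall x, 0 < pi x) /\ \sum_(x : X) pi x = 1.

Definition ip (f g : X -> R) : R := \sum_(x : X) f x * g x * pi x.
Definition pnorm (f : X -> R) : R := Num.sqrt (ip f f).

Definition l20 (f : X -> R) : Prop := \sum_(x : X) f x * pi x = 0.

Definition is_transition (P : X -> X -> R) : Prop :=
  (forall x y, 0 <= P x y) /\ (forall x, \sum_(y : X) P x y = 1).

Definition reversible (P : X -> X -> R) : Prop :=
  forall x y, pi x * P x y = pi y * P y x.

Definition irreducible (P : X -> X -> R) : Prop :=
  forall x y, exists n, 0 < kpow P n x y.

(* the period of every state (gcd of its return times) is 1 *)
Definition aperiodic (P : X -> X -> R) : Prop :=
  forall x (d : nat), (forall n, (0 < n)%N -> 0 < kpow P n x x -> (d %| n)%N) ->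
    d = 1%N.

Definition ergodic (P : X -> X -> R) : Prop := irreducible P /\ aperiodic P.

Definition rho (K : X -> X -> R) : R :=
  sup [set r | exists f : X -> R, [/\ l20 f, f <> (fun _ => 0) &
                 r = `|ip f (kapp K f)| / ip f f] ].

Definition opnorm0 (K : X -> X -> R) : R :=
  sup [set r | exists f : X -> R, [/\ l20 f, f <> (fun _ => 0) &
                 r = pnorm (kapp K f) / pnorm f] ].

Section Orbit.
Variables (gT : finGroupType) (H : {group gT}) (to : action H X).

Definition orb (x : X) : {set X} := orbit to H x.

Definition piset (A : {set X}) : R := \sum_(x in A) pi x.

Definition gibbsK : X -> X -> R :=
  fun x y => if y \in orb x then pi y / piset (orb x) else 0.

Definition mh_off (x y : X) : R :=
  if (y \in orb x) && (y != x) then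
    ((#|orb x|.-1)%:R)^-1 * Num.min 1 (pi y / pi x)
  else 0.

Definition mhK : X -> X -> R :=
  fun x y => if x == y then 1 - \sum_(z : X | z != x) mh_off x z else mh_off x y.
End Orbit.
End Defs.

(* Main.v *)
Require Import Defs.
From HB Require Import structures.
From mathcomp Require Import all_boot all_order all_algebra all_fingroup.
From mathcomp Require Import classical_sets reals boolp.
From mathcomp Require Import ring lra.
Import Order.TTheory GRing.Theory Num.Theory.
Local Open Scope ring_scope.
Set Implicit Arguments. Unset Strict Implicit. Unset Printing Implicit Defensive.
Section Lin.
Variables (R : realType) (X : finType) (pi : X -> R).
Hypothesis pi_gt0 : forall x, 0 < pi x.
Implicit Types (K L : X -> X -> R) (f g h : X -> R) (a : R).

Lemma ipC f g : ip pi f g = ip pi g f.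
Proof. by apply: eq_bigr => x _; rewrite (mulrC (f x)). Qed.

Lemma ipDl f g h : ip pi (fun x => f x + g x) h = ip pi f h + ip pi g h.
Proof. by rewrite /ip -big_split; apply: eq_bigr => x _ /=; ring. Qed.

Lemma ipZl a f h : ip pi (fun x => a * f x) h = a * ip pi f h.
Proof. by rewrite /ip mulr_sumr; apply: eq_bigr => x _ /=; ring. Qed.

Lemma ipDr f g h : ip pi h (fun x => f x + g x) = ip pi h f + ip pi h g.
Proof. by rewrite ipC ipDl !(ipC h). Qed.

Lemma ipZr a f h : ip pi h (fun x => a * f x) = a * ip pi h f.
Proof. by rewrite ipC ipZl (ipC h). Qed.

Lemma ipBl f g h : ip pi (fun x => f x - g x) h = ip pi f h - ip pi g h.
Proof. by rewrite /ip -sumrB; apply: eq_bigr => x _ /=; ring. Qed.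

Lemma ipBr f g h : ip pi h (fun x => f x - g x) = ip pi h f - ip pi h g.
Proof. by rewrite ipC ipBl !(ipC h). Qed.

Lemma ip_ge0 f : 0 <= ip pi f f.
Proof.
apply: sumr_ge0 => x _; apply: mulr_ge0; first by rewrite -expr2 sqr_ge0.
exact: ltW.
Qed.

Lemma ip_gt0 f : f <> (fun _ => 0) -> 0 < ip pi f f.
Proof.
move=> fn0; rewrite lt_def ip_ge0 andbT; apply/negP => /eqP H0.
apply: fn0; apply: funext => x.
have h : f x * f x * pi x = 0.
  apply: (@psumr_eq0P _ _ xpredT (fun x => f x * f x * pi x) _ H0 x isT).
  by move=> y _; apply: mulr_ge0; [rewrite -expr2 sqr_ge0 | exact: ltW].
move/eqP: h; rewrite mulf_eq0 (gt_eqF (pi_gt0 x)) orbF mulf_eq0 orbb.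
by move/eqP.
Qed.

Lemma ip_term f y : f y * f y * pi y <= ip pi f f.
Proof.
rewrite /ip (bigD1 y) //= lerDl; apply: sumr_ge0 => x _.
by apply: mulr_ge0; [rewrite -expr2 sqr_ge0 | exact: ltW].
Qed.

Lemma kappD K f g : kapp K (fun x => f x + g x) = (fun x => kapp K f x + kapp K g x).
Proof. by apply: funext => x; rewrite /kapp -big_split; apply: eq_bigr => y _ /=; ring. Qed.

Lemma kappB K f g : kapp K (fun x => f x - g x) = (fun x => kapp K f x - kapp K g x).
Proof. by apply: funext => x; rewrite /kapp -sumrB; apply: eq_bigr => y _ /=; ring. Qed.

Lemma kappZ K a f : kapp K (fun x => a * f x) = (fun x => a * kapp K f x).
Proof. by apply: funext => x; rewrite /kapp mulr_sumr; apply: eq_bigr => y _ /=; ring. Qed.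

Lemma kapp_sub K L f : kapp (ksub K L) f = (fun x => kapp K f x - kapp L f x).
Proof. by apply: funext => x; rewrite /kapp /ksub -sumrB; apply: eq_bigr => y _ /=; ring. Qed.

Lemma kapp_mul K L f : kapp (kmul K L) f = kapp K (kapp L f).
Proof.
apply: funext => x; rewrite /kapp /kmul.
under eq_bigr do rewrite mulr_suml.
rewrite exchange_big /=; apply: eq_bigr => z _.
by rewrite mulr_sumr; apply: eq_bigr => y _; rewrite mulrA.
Qed.

Lemma kapp0 K : kapp K (fun _ => 0) = (fun _ => 0).
Proof. by apply: funext => x; rewrite /kapp big1 // => y _; rewrite mulr0. Qed.

Lemma selfadj K f g : reversible pi K -> ip pi f (kapp K g) = ip pi (kapp K f) g.
Proof.
move=> rK; rewrite /ip /kapp.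
under eq_bigr do rewrite mulr_sumr mulr_suml.
under [RHS]eq_bigr do rewrite !mulr_suml.
rewrite [RHS]exchange_big /=; apply: eq_bigr => x _; apply: eq_bigr => y _.
have := rK x y => E.
transitivity (f x * g y * (pi x * K x y)); first by ring.
by rewrite E; ring.
Qed.

Lemma l20_kapp K f : reversible pi K -> (forall x, \sum_y K x y = 1) ->
  l20 pi f -> l20 pi (kapp K f).
Proof.
move=> rK sK; rewrite /l20 => f0.
have E : forall g, \sum_x g x * pi x = ip pi (fun _ => 1) g.
  by move=> g; apply: eq_bigr => x _; rewrite mul1r.
rewrite E selfadj //; transitivity (ip pi (fun _ => 1) f); last by rewrite -E.
apply: eq_bigr => x _.
congr (_ * _ * _); rewrite /kapp -(sK x).
by apply: eq_bigr => y _; rewrite sK mulr1.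
Qed.

End Lin.
Section Bound.
Variables (R : realType) (X : finType) (pi : X -> R).
Hypothesis pi_gt0 : forall x, 0 < pi x.
Hypothesis pi_sum : \sum_x pi x = 1.
Implicit Types (K L : X -> X -> R) (f g h : X -> R) (a : R).

Local Open Scope classical_set_scope.
Definition cst := \sum_y (Num.sqrt (pi y))^-1.
Definition kA K := \sum_x \sum_y `|K x y|.

Lemma pnorm_ge0 f : 0 <= pnorm pi f.
Proof. exact: sqrtr_ge0. Qed.

Lemma pnorm_sqr f : pnorm pi f ^+ 2 = ip pi f f.
Proof. by rewrite /pnorm sqr_sqrtr // ip_ge0. Qed.

Lemma cst_ge0 : 0 <= cst.
Proof. by apply: sumr_ge0 => y _; rewrite invr_ge0 sqrtr_ge0. Qed.

Lemma kA_ge0 K : 0 <= kA K.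
Proof. by apply: sumr_ge0 => x _; apply: sumr_ge0 => y _. Qed.

Lemma fbound f y : `|f y| <= cst * pnorm pi f.
Proof.
have sp : 0 < Num.sqrt (pi y) by rewrite sqrtr_gt0.
have h1 : `|f y| * Num.sqrt (pi y) <= pnorm pi f.
  rewrite -sqrtr_sqr -sqrtrM ?sqr_ge0 // /pnorm ler_sqrt ?ip_ge0 //.
  by rewrite expr2; exact: ip_term.
have h2 : `|f y| <= pnorm pi f / Num.sqrt (pi y) by rewrite ler_pdivlMr.
apply: (le_trans h2); rewrite [X in _ <= X]mulrC.
apply: ler_pM; [exact: pnorm_ge0 | by rewrite invr_ge0 sqrtr_ge0 | done | ].
rewrite /cst (bigD1 y) //= lerDl; apply: sumr_ge0 => z _.
by rewrite invr_ge0 sqrtr_ge0.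
Qed.

Lemma kapp_bound K f x : `|kapp K f x| <= kA K * (cst * pnorm pi f).
Proof.
apply: (le_trans (ler_norm_sum _ _ _)).
apply: (@le_trans _ _ (\sum_y `|K x y| * (cst * pnorm pi f))).
  apply: ler_sum => y _; rewrite normrM; apply: ler_pM => //; exact: fbound.
rewrite -mulr_suml; apply: ler_pM => //.
- by apply: sumr_ge0 => y _.
- by apply: mulr_ge0; [exact: cst_ge0 | exact: pnorm_ge0].
rewrite /kA [X in _ <= X](bigD1 x) //= lerDl; apply: sumr_ge0 => z _.
by apply: sumr_ge0.
Qed.

Lemma rho_val_bound K f : `|ip pi f (kapp K f)| <= kA K * cst ^+ 2 * ip pi f f.
Proof.
apply: (le_trans (ler_norm_sum _ _ _)).
apply: (@le_trans _ _ (\sum_x (cst * pnorm pi f) * (kA K * (cst * pnorm pi f)) * pi x)).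
  apply: ler_sum => x _; rewrite !normrM (ger0_norm (ltW (pi_gt0 x))).
  apply: ler_pM; [by rewrite mulr_ge0 | exact: ltW | | done].
  apply: ler_pM => //; [exact: fbound | exact: kapp_bound].
rewrite -mulr_sumr pi_sum mulr1 -pnorm_sqr le_eqVlt; apply/orP; left; apply/eqP; ring.
Qed.

Lemma opn_val_bound K f : pnorm pi (kapp K f) <= kA K * cst * pnorm pi f.
Proof.
rewrite /pnorm; set b := kA K * cst * pnorm pi f.
have b0 : 0 <= b by rewrite /b; apply: mulr_ge0; [apply: mulr_ge0; [exact: kA_ge0|exact: cst_ge0]|exact: pnorm_ge0].
rewrite -(ger0_norm b0) -sqrtr_sqr ler_sqrt ?sqr_ge0 //.
apply: (@le_trans _ _ (\sum_x b ^+ 2 * pi x)); last by rewrite -mulr_sumr pi_sum mulr1.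
apply: ler_sum => x _; apply: ler_pM; [by rewrite -expr2 sqr_ge0 | exact: ltW | | done].
rewrite expr2; apply: (le_trans (ler_norm _)); rewrite normrM.
by apply: ler_pM => //; rewrite /b -mulrA; exact: kapp_bound.
Qed.

Lemma sup_gen (F : (X -> R) -> R) B :
  (forall f, l20 pi f -> f <> (fun _ => 0) -> 0 <= F f <= B) ->
  let S := sup [set r | exists f, [/\ l20 pi f, f <> (fun _ => 0) & r = F f]] in
  0 <= S /\ forall f, l20 pi f -> f <> (fun _ => 0) -> F f <= S.
Proof.
move=> hF S.
case: (pselect (exists f, l20 pi f /\ f <> (fun _ => 0))) => [[f0 [l0 n0]]|none].
  have hs : has_sup [set r | exists f, [/\ l20 pi f, f <> (fun _ => 0) & r = F f]].
    split; first by exists (F f0), f0.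
    by exists B => r [f [lf nf ->]]; case/andP: (hF f lf nf).
  have ub := sup_upper_bound hs.
  split; last by move=> f lf nf; apply: ub; exists f.
  case/andP: (hF f0 l0 n0) => h0 _; apply: (le_trans h0); apply: ub; exists f0.
  done.
rewrite /S.
have -> : [set r | exists f, [/\ l20 pi f, f <> (fun _ => 0) & r = F f]] = @set0 R.
  apply: funext => r; apply: propext; split => //= -[f [lf nf _]].
  by apply: none; exists f.
split; first by rewrite sup0.
by move=> f lf nf; exfalso; apply: none; exists f.
Qed.

Lemma ip0l g : ip pi (fun _ => 0) g = 0.
Proof. by rewrite /ip big1 // => x _; rewrite !mul0r. Qed.

Lemma pnorm0 : pnorm pi (fun _ => 0) = 0.
Proof. by rewrite /pnorm ip0l sqrtr0. Qed.

Lemma pnorm_gt0 f : f <> (fun _ => 0) -> 0 < pnorm pi f.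
Proof. by move=> nf; rewrite sqrtr_gt0 ip_gt0. Qed.

Lemma rho_prop K : 0 <= rho pi K /\
  forall f, l20 pi f -> `|ip pi f (kapp K f)| <= rho pi K * ip pi f f.
Proof.
have hF : forall f, l20 pi f -> f <> (fun _ => 0) ->
    0 <= `|ip pi f (kapp K f)| / ip pi f f <= kA K * cst ^+ 2.
  move=> f lf nf; rewrite divr_ge0 ?normr_ge0 ?ip_ge0 //= ler_pdivrMr ?ip_gt0 //.
  exact: rho_val_bound.
have [h0 h1] := @sup_gen (fun f => `|ip pi f (kapp K f)| / ip pi f f) _ hF.
split; first exact: h0.
move=> f lf; case: (pselect (f = fun _ => 0)) => [->|nf].
  by rewrite !ip0l normr0 mulr0.
by have := h1 f lf nf; rewrite ler_pdivrMr ?ip_gt0.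
Qed.

Lemma opn_prop K : 0 <= opnorm0 pi K /\
  forall f, l20 pi f -> pnorm pi (kapp K f) <= opnorm0 pi K * pnorm pi f.
Proof.
have hF : forall f, l20 pi f -> f <> (fun _ => 0) ->
    0 <= pnorm pi (kapp K f) / pnorm pi f <= kA K * cst.
  move=> f lf nf; rewrite divr_ge0 ?pnorm_ge0 //= ler_pdivrMr ?pnorm_gt0 //.
  exact: opn_val_bound.
have [h0 h1] := @sup_gen (fun f => pnorm pi (kapp K f) / pnorm pi f) _ hF.
split; first exact: h0.
move=> f lf; case: (pselect (f = fun _ => 0)) => [->|nf].
  by rewrite kapp0 pnorm0 mulr0.
by have := h1 f lf nf; rewrite ler_pdivrMr ?pnorm_gt0.
Qed.

End Bound.
Lemma min_div (R : realType) (a b : R) : 0 < a -> a * Num.min 1 (b / a) = Num.min a b.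
Proof.
move=> a0; rewrite minr_pMr ?ltW // mulr1 [a * _]mulrC divfK // gt_eqF //.

Qed.

Section Orb.
Variables (R : realType) (X : finType) (pi : X -> R).
Hypothesis pi_gt0 : forall x, 0 < pi x.
Variables (gT : finGroupType) (H : {group gT}) (to : action H X).
Implicit Types (K L : X -> X -> R) (f g h : X -> R) (a : R).
Local Notation G := (gibbsK pi to).
Local Notation M := (mhK pi to).

Lemma orb_refl x : x \in orb to x.
Proof. exact: orbit_refl. Qed.

Lemma orb_sym x y : (y \in orb to x) = (x \in orb to y).
Proof. exact: (orbit_in_sym to (subxx H)). Qed.

Lemma orb_eq x y : y \in orb to x -> orb to y = orb to x.
Proof. by move=> h; apply/orbit_in_eqP. Qed.

Lemma piset_gt0 x : 0 < piset pi (orb to x).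
Proof.
rewrite /piset (bigD1 x) ?orb_refl //=.
have h1 := pi_gt0 x.
have h2 : 0 <= \sum_(i in orb to x | i != x) pi i by apply: sumr_ge0 => i _; exact: ltW.
lra.
Qed.

Lemma G_rev : reversible pi G.
Proof.
move=> x y; rewrite /gibbsK orb_sym.
case hy: (x \in orb to y); last by rewrite !mulr0.
rewrite (orb_eq hy); exact: mulrCA.
Qed.

Lemma G_sum x : \sum_y G x y = 1.
Proof.
by rewrite /gibbsK -big_mkcond /= -mulr_suml divff // gt_eqF ?piset_gt0.
Qed.

Lemma G_supp x y : G x y != 0 -> y \in orb to x.
Proof. by rewrite /gibbsK; case: ifP => // _; rewrite eqxx. Qed.

Lemma M_supp x y : M x y != 0 -> y \in orb to x.
Proof.
case: (eqVneq x y) => [->|nxy]; first by rewrite orb_refl.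
rewrite /mhK (negbTE nxy) /mh_off; case: ifP => [/andP[]//|_]; by rewrite eqxx.
Qed.

Lemma M_sum x : \sum_y M x y = 1.
Proof.
rewrite (bigD1 x) //=.
rewrite (eq_bigr (fun y => mh_off pi to x y)); first by rewrite /mhK eqxx subrK.
by move=> y nyx; rewrite /mhK eq_sym (negbTE nyx).
Qed.

Lemma M_rev : reversible pi M.
Proof.
move=> x y; case: (eqVneq x y) => [->//|nxy].
rewrite /mhK (negbTE nxy) eq_sym (negbTE nxy) /mh_off orb_sym eq_sym.
case hy: (x \in orb to y); last by rewrite /= !mulr0.
rewrite /= nxy (orb_eq hy) mulrCA [RHS]mulrCA !min_div //.
by congr (_ * _); apply: minC.
Qed.

Lemma kapp_orbconst K g : (forall x, \sum_y K x y = 1) ->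
  (forall x y, K x y != 0 -> y \in orb to x) ->
  (forall x y, y \in orb to x -> g y = g x) -> kapp K g = g.
Proof.
move=> sK suppK cg; apply: funext => x; rewrite /kapp.
transitivity (\sum_y K x y * g x); last by rewrite -mulr_suml sK mul1r.
apply: eq_bigr => y _; case: (eqVneq (K x y) 0) => [->|nz]; first by rewrite !mul0r.
by rewrite (cg x y (suppK x y nz)).
Qed.

Lemma G_const f x y : y \in orb to x -> kapp G f y = kapp G f x.
Proof. by move=> hy; rewrite /kapp /gibbsK (orb_eq hy). Qed.

Lemma MG f : kapp M (kapp G f) = kapp G f.
Proof. apply: kapp_orbconst; [exact: M_sum | exact: M_supp | exact: G_const]. Qed.

Lemma GG f : kapp G (kapp G f) = kapp G f.
Proof. apply: kapp_orbconst; [exact: G_sum | exact: G_supp | exact: G_const]. Qed.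

End Orb.
Section Main.
Variables (R : realType) (X : finType) (pi : X -> R).
Hypothesis pi_gt0 : forall x, 0 < pi x.
Hypothesis pi_sum : \sum_x pi x = 1.
Implicit Types (K L : X -> X -> R) (f g h u v : X -> R) (a : R).
Local Open Scope classical_set_scope.

Lemma l20B u v : l20 pi u -> l20 pi v -> l20 pi (fun x => u x - v x).
Proof.
rewrite /l20 => lu lv.
under eq_bigr do rewrite mulrBl.
by rewrite sumrB lu lv subr0.
Qed.

Lemma l20D u v : l20 pi u -> l20 pi v -> l20 pi (fun x => u x + v x).
Proof.
rewrite /l20 => lu lv.
under eq_bigr do rewrite mulrDl.
by rewrite big_split /= lu lv addr0.
Qed.

Lemma l20_scale a u : l20 pi u -> l20 pi (fun x => a * u x).
Proof.
rewrite /l20 => lu; under eq_bigr do rewrite -mulrA.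
by rewrite -mulr_sumr lu mulr0.
Qed.

Lemma rho_le K b : 0 <= b ->
  (forall f, l20 pi f -> f <> (fun _ => 0) -> `|ip pi f (kapp K f)| <= b * ip pi f f) ->
  rho pi K <= b.
Proof.
move=> b0 hb; rewrite /rho.
case: (pselect (exists f, l20 pi f /\ f <> (fun _ => 0))) => [[f0 [l0 n0]]|none].
  apply: ge_sup; first by exists (`|ip pi f0 (kapp K f0)| / ip pi f0 f0), f0.
  move=> r [f [lf nf ->]]; rewrite ler_pdivrMr ?ip_gt0 //; exact: hb.
have -> : [set r | exists f, [/\ l20 pi f, f <> (fun _ => 0) &
            r = `|ip pi f (kapp K f)| / ip pi f f]] = @set0 R.
  apply: funext => r; apply: propext; split => //= -[f [lf nf _]].
  by apply: none; exists f.
by rewrite sup0.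
Qed.

Lemma polar P u v : reversible pi P -> l20 pi u -> l20 pi v ->
  2 * `|ip pi u (kapp P v)| <= rho pi P * (ip pi u u + ip pi v v).
Proof.
move=> rP lu lv.
have [_ hr] := rho_prop pi_gt0 pi_sum P.
have n1 := hr _ (l20D lu lv).
have n2 := hr _ (l20B lu lv).
rewrite kappD ipDl !ipDr in n1.
rewrite kappB ipBl !ipBr in n2.
have e : ip pi v (kapp P u) = ip pi u (kapp P v) by rewrite selfadj // ipC.
rewrite e in n1 n2.
rewrite !ipDl in n1; rewrite !ipBl in n2.
rewrite (ipC pi v u) in n1 n2.
move: n1 n2; rewrite !ler_norml => /andP[n1 n1'] /andP[n2 n2'].
rewrite -[2]ger0_norm // -normrM ler_norml.
set w := ip pi u (kapp P v) in n1 n1' n2 n2' *.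
set r := rho pi P in n1 n1' n2 n2' *.
set a := ip pi u (kapp P u) in n1 n1' n2 n2' *.
set c := ip pi v (kapp P v) in n1 n1' n2 n2' *.
set uu := ip pi u u in n1 n1' n2 n2' *.
set vv := ip pi v v in n1 n1' n2 n2' *.
set uv := ip pi u v in n1 n1' n2 n2' *.
apply/andP; split; nra.
Qed.

End Main.
Lemma sandwich (R : realType) (X : finType) (pi : X -> R) A P f :
  reversible pi A ->
  ip pi f (kapp (kmul A (kmul P A)) f) = ip pi (kapp A f) (kapp P (kapp A f)).
Proof. by move=> rA; rewrite !kapp_mul selfadj. Qed.

Theorem proposition3p5 (R : realType) (X : finType) (pi : X -> R)
  (P : X -> X -> R) (gT : finGroupType) (H : {group gT}) (to : action H X) :
  is_pmf pi -> is_transition P -> reversible pi P -> ergodic P ->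
  let G := gibbsK pi to in
  let M := mhK pi to in
  let theta := opnorm0 pi (ksub M G) in
  0 <= rho pi (kmul M (kmul P M)) - rho pi (kmul G (kmul P G)) /\
  rho pi (kmul M (kmul P M)) - rho pi (kmul G (kmul P G))
    <= rho pi P * (2 * theta + theta ^+ 2).
Proof.
move=> [pi_gt0 pi_sum] _ rP _ G M theta.
have rG : reversible pi G := G_rev pi to.
have rM : reversible pi M := M_rev pi_gt0 to.
have sG : forall x, \sum_y G x y = 1 := G_sum pi_gt0 to.
have sM : forall x, \sum_y M x y = 1 := M_sum pi to.
have [rMge0 rhoM] := rho_prop pi_gt0 pi_sum (kmul M (kmul P M)).
have [rGge0 rhoG] := rho_prop pi_gt0 pi_sum (kmul G (kmul P G)).
have [rPge0 rhoP] := rho_prop pi_gt0 pi_sum P.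
have [th0 thb] := opn_prop pi_gt0 pi_sum (ksub M G).
have proj : forall f, ip pi (kapp G f) (kapp G f) <= ip pi f f.
  move=> f; have := ip_ge0 pi_gt0 (fun x => f x - kapp G f x).
  rewrite ipBl !ipBr (ipC pi (kapp G f) f).
  have -> : ip pi f (kapp G f) = ip pi (kapp G f) (kapp G f).
    by rewrite -{1}(GG pi_gt0 to f) selfadj.
  lra.
split.
  rewrite subr_ge0; apply: (rho_le pi_gt0) => // f lf nf.
  rewrite sandwich //.
  set g := kapp G f.
  have lg : l20 pi g := l20_kapp rG sG lf.
  have -> : ip pi g (kapp P g) = ip pi g (kapp (kmul M (kmul P M)) g).
    by rewrite sandwich // /g (MG pi to f).
  apply: (le_trans (rhoM g lg)); apply: ler_wpM2l => //; exact: proj.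
rewrite lerBlDl.
apply: (rho_le pi_gt0).
  apply: addr_ge0 => //; apply: mulr_ge0 => //; apply: addr_ge0.
    by apply: mulr_ge0.
  by apply: exprn_ge0.
move=> f lf nf.
set g := kapp G f.
set h := kapp (ksub M G) f.
have lg : l20 pi g := l20_kapp rG sG lf.
have lMf : l20 pi (kapp M f) := l20_kapp rM sM lf.
have lh : l20 pi h by rewrite /h kapp_sub; exact: l20B.
have eMf : kapp M f = (fun x => g x + h x).
  by apply: funext => x; rewrite /h kapp_sub /g; ring.
have hh : ip pi h h <= theta ^+ 2 * ip pi f f.
  rewrite -!(pnorm_sqr pi_gt0) -exprMn; apply: lerXn2r; rewrite ?nnegrE ?pnorm_ge0 ?mulr_ge0 //.
    exact: pnorm_ge0.
  exact: thb.
have ff0 : 0 <= ip pi f f := ip_ge0 pi_gt0 f.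
have B : 2 * `|ip pi g (kapp P h)| <= 2 * theta * rho pi P * ip pi f f.
  have [th_eq0|th_gt0] := eqVneq theta 0.
    have h0 : h = (fun _ => 0).
      case: (pselect (h = fun _ => 0)) => // hn.
      have h1 := ip_gt0 pi_gt0 hn.
      move: hh; rewrite th_eq0 expr0n /= mul0r => hh.
      by exfalso; move: (lt_le_trans h1 hh); rewrite ltxx.
    by rewrite h0 kapp0 (ipC pi g) ip0l normr0 mulr0 th_eq0 mulr0 !mul0r.
  have thp : 0 < theta by rewrite lt_def th_gt0 th0.
  have := polar pi_gt0 pi_sum rP (l20_scale theta lg) lh.
  rewrite !ipZl ipZr normrM (ger0_norm th0) => hp.
  have k : theta * (2 * `|ip pi g (kapp P h)|) <= theta * (2 * theta * rho pi P * ip pi f f).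
    rewrite mulrCA; apply: (le_trans hp).
    apply: (@le_trans _ _ (rho pi P * (theta * (theta * ip pi f f) + theta ^+ 2 * ip pi f f))).
      apply: ler_wpM2l => //; apply: lerD => //.
      apply: ler_wpM2l => //; apply: ler_wpM2l => //; exact: proj.
    rewrite le_eqVlt; apply/orP; left; apply/eqP; ring.
  by rewrite ler_pM2l in k.
rewrite sandwich // eMf kappD ipDl !ipDr.
have e : ip pi h (kapp P g) = ip pi g (kapp P h) by rewrite selfadj // ipC.
have e2 : ip pi g (kapp P g) = ip pi f (kapp (kmul G (kmul P G)) f) by rewrite sandwich.
rewrite e e2.
have A := rhoG f lf.
have C : `|ip pi h (kapp P h)| <= rho pi P * (theta ^+ 2 * ip pi f f).
  apply: (le_trans (rhoP h lh)); exact: ler_wpM2l.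
set a := ip pi f _ in A *; set w := ip pi g _ in B *; set c := ip pi h _ in C *.
have T : `|a + w + (w + c)| <= `|a| + 2 * `|w| + `|c|.
  have n1 := ler_normD (a + w) (w + c); have n2 := ler_normD a w.
  have n3 := ler_normD w c; lra.
apply: (le_trans T).
have -> : (rho pi (kmul G (kmul P G)) + rho pi P * (2 * theta + theta ^+ 2)) * ip pi f f
  = rho pi (kmul G (kmul P G)) * ip pi f f + 2 * theta * rho pi P * ip pi f f
    + rho pi P * (theta ^+ 2 * ip pi f f) by ring.
by rewrite lerD // lerD.
Qed.
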